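(* Let $K\ge2$ be an integer, let $\phi,\Phi$ be the standard normal PDF and CDF, and let $t\mapsto\tilde\alpha_t\in[0,1)$ be a differentiable (Gaussian) noise schedule with time-derivative $\tilde\alpha_t'$. Define $$\mathcal T(\tilde\alpha_t)=\frac{K}{K-1}\left[\int_{-\infty}^{\infty}\phi(z-\nu_t)\Phi^{K-1}(z)\,dz-\frac1K\right],\qquad \nu_t=\frac{\tilde\alpha_t}{\sqrt{1-\tilde\alpha_t^2}},$$ and for $n\ge0$ let $M_n=\int_{-\infty}^\infty z^n\phi(z)\Phi^{K-1}(z)\,dz$ and $I_n=\int_{-\infty}^\infty z^{n+1}\phi(z)\Phi^{K-1}(z)\,dz$. Then $$\frac{d}{dt}\mathcal T(\tilde\alpha_t)=\frac{K\,e^{-\nu_t^2/2}}{K-1}\,\frac{\tilde\alpha_t'}{(1-\tilde\alpha_t^2)^{3/2}}\sum_{n=0}^{\infty}\frac{\nu_t^n}{n!}\big[I_n-\nu_tM_n\big].$$ *)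

(* Defs.v *)
From Stdlib Require Import Reals Arith.
From Coquelicot Require Import Coquelicot.
Open Scope R_scope.

Definition phi (z : R) : R := exp (- z ^ 2 / 2) / sqrt (2 * PI).

Definition Phi (z : R) : R :=
  RInt_gen phi (Rbar_locally m_infty) (at_point z).

Definition RInt_R (f : R -> R) : R :=
  RInt_gen f (Rbar_locally m_infty) (Rbar_locally p_infty).

Definition nu (a : R) : R := a / sqrt (1 - a ^ 2).

Definition calT (K : nat) (a : R) : R :=
  INR K / (INR K - 1) *
  (RInt_R (fun z => phi (z - nu a) * Phi z ^ (K - 1)) - 1 / INR K).

Definition M (K n : nat) : R := RInt_R (fun z => z ^ n * phi z * Phi z ^ (K - 1)).
Definition I (K n : nat) : R := RInt_R (fun z => z ^ (n + 1) * phi z * Phi z ^ (K - 1)).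

(* Main.v *)
Require Import Defs.
From Stdlib Require Import Reals Arith.
From Coquelicot Require Import Coquelicot.
From Stdlib Require Import Lra Lia FunctionalExtensionality.
Open Scope R_scope.

Lemma ball_R (x e y : R) : ball x e y <-> Rabs (y - x) < e.
Proof. reflexivity. Qed.

Lemma exp_le_exp x y : x <= y -> exp x <= exp y.
Proof. intros [H|H]. left; apply exp_increasing; auto. subst; lra. Qed.

Lemma cd (f : R -> R) x : ex_derive f x -> continuous f x.
Proof. intros H. exact (ex_derive_continuous (K:=R_AbsRing) (V:=R_NormedModule) f x H). Qed.

Lemma cont_ex_RInt (f : R -> R) a b : (forall z, continuous f z) -> ex_RInt f a b.
Proof. intros H; apply (ex_RInt_continuous (V:=R_CompleteNormedModule)); auto. Qed.

Lemma RInt_exp_neg C a b : is_RInt (fun t => C * exp (- t)) a b (C * exp (-a) - C * exp (-b)).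
Proof.
  replace (C * exp (-a) - C * exp (-b)) with (minus ((fun t => - C * exp (-t)) b) ((fun t => - C * exp (-t)) a)).
  2:{ unfold minus, plus, opp; simpl; lra. }
  apply (is_RInt_derive (V:=R_CompleteNormedModule) (fun t => - C * exp (-t)) (fun t => C * exp (-t))).
  - intros x _. auto_derive; auto. ring.
  - intros x _. apply cd. auto_derive; auto.
Qed.

Lemma RInt_exp_pos C a b : is_RInt (fun t => C * exp t) a b (C * exp b - C * exp a).
Proof.
  replace (C * exp b - C * exp a) with (minus ((fun t => C * exp t) b) ((fun t => C * exp t) a)).
  2:{ unfold minus, plus, opp; simpl; lra. }
  apply (is_RInt_derive (V:=R_CompleteNormedModule) (fun t => C * exp t) (fun t => C * exp t)).
  - intros x _. auto_derive; auto. ring.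
  - intros x _. apply cd. auto_derive; auto.
Qed.

Definition dom (f : R -> R) (C : R) :=
  (forall z, continuous f z) /\ (forall z, Rabs (f z) <= C * exp (- Rabs z)).

Lemma dom_A1 f C a b : dom f C -> 0 <= a <= b -> Rabs (RInt f a b) <= C * exp (- a).
Proof.
  intros [Hc Hb] Hab.
  eapply Rle_trans. apply abs_RInt_le. lra. apply cont_ex_RInt; auto.
  eapply Rle_trans. apply RInt_le with (g := fun t => C * exp (- t)). lra.
  apply cont_ex_RInt. intros z. apply continuous_comp; auto. apply continuous_Rabs.
  eexists; apply RInt_exp_neg.
  intros x Hx. rewrite <- (Rabs_right x) at 2 by lra. apply Hb.
  rewrite (is_RInt_unique _ _ _ _ (RInt_exp_neg C a b)).
  assert (0 <= C).
  { specialize (Hb 0). pose proof (Rabs_pos (f 0)). pose proof (exp_pos (- Rabs 0)). nra. }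
  pose proof (exp_pos (-b)). nra.
Qed.

Lemma dom_A2 f C a b : dom f C -> a <= b <= 0 -> Rabs (RInt f a b) <= C * exp b.
Proof.
  intros [Hc Hb] Hab.
  eapply Rle_trans. apply abs_RInt_le. lra. apply cont_ex_RInt; auto.
  eapply Rle_trans. apply RInt_le with (g := fun t => C * exp t). lra.
  apply cont_ex_RInt. intros z. apply continuous_comp; auto. apply continuous_Rabs.
  eexists; apply RInt_exp_pos.
  intros x Hx. replace x with (- Rabs x) at 2. apply Hb. rewrite Rabs_left1; lra.
  rewrite (is_RInt_unique _ _ _ _ (RInt_exp_pos C a b)).
  assert (0 <= C).
  { specialize (Hb 0). pose proof (Rabs_pos (f 0)). pose proof (exp_pos (- Rabs 0)). nra. }
  pose proof (exp_pos a). nra.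
Qed.

Lemma dom_C_pos f C : dom f C -> 0 <= C.
Proof.
  intros [_ Hb]. specialize (Hb 0). pose proof (Rabs_pos (f 0)). pose proof (exp_pos (- Rabs 0)). nra.
Qed.

Lemma dom_A3 f C a b : dom f C -> a <= b -> Rabs (RInt f a b) <= 2 * C.
Proof.
  intros Hd Hab. pose proof (dom_C_pos _ _ Hd) as HC.
  destruct Hd as [Hc Hb0].
  destruct (Rle_dec 0 a).
  - eapply Rle_trans. apply (dom_A1 f C). split; auto. lra.
    assert (exp (-a) <= 1). { rewrite <- exp_0. apply exp_le_exp. lra. } nra.
  - destruct (Rle_dec b 0).
    + eapply Rle_trans. apply (dom_A2 f C). split; auto. lra.
      assert (exp b <= 1). { rewrite <- exp_0. apply exp_le_exp. lra. } nra.
    + rewrite <- (RInt_Chasles f a 0 b) by (apply cont_ex_RInt; auto).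
      unfold plus; simpl.
      eapply Rle_trans. apply Rabs_triang.
      pose proof (dom_A2 f C a 0 (conj Hc Hb0) ltac:(lra)).
      pose proof (dom_A1 f C 0 b (conj Hc Hb0) ltac:(lra)).
      rewrite exp_0 in *. rewrite Ropp_0, exp_0 in *. lra.
Qed.

Lemma tail_small C eps : 0 <= C -> 0 < eps -> exists M, 0 <= M /\ C * exp (- M) < eps.
Proof.
  intros HC He.
  exists (Rabs (ln (eps / (C + 1))) + 1). split. pose proof (Rabs_pos (ln (eps / (C+1)))); lra.
  assert (exp (- (Rabs (ln (eps / (C + 1))) + 1)) < eps / (C + 1)).
  { rewrite <- (exp_ln (eps / (C+1))) at 2.
    apply exp_increasing. pose proof (Rle_abs (- ln (eps / (C+1)))). rewrite Rabs_Ropp in H. lra.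
    apply Rdiv_lt_0_compat; lra. }
  pose proof (exp_pos (- (Rabs (ln (eps / (C + 1))) + 1))).
  assert (eps / (C+1) * (C+1) = eps) by (field; lra).
  nra.
Qed.

Lemma RInt_diff f u v : (forall z, continuous f z) -> RInt f 0 v - RInt f 0 u = RInt f u v.
Proof.
  intros Hc. rewrite <- (RInt_Chasles f 0 u v) by (apply cont_ex_RInt; auto).
  unfold plus; simpl. ring.
Qed.

Lemma RInt_abs_swap f u v : (forall z, continuous f z) -> Rabs (RInt f u v) = Rabs (RInt f v u).
Proof.
  intros Hc. rewrite <- (opp_RInt_swap f v u) by (apply cont_ex_RInt; auto).
  unfold opp; simpl. apply Rabs_Ropp.
Qed.

Lemma dom_lim_p f C : dom f C -> exists lp, filterlim (fun x => RInt f 0 x) (Rbar_locally p_infty) (locally lp).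
Proof.
  intros Hd. pose proof (dom_C_pos _ _ Hd) as HC.
  apply (filterlim_locally_cauchy (U:=R_CompleteSpace)).
  intros eps. destruct (tail_small C eps HC (cond_pos eps)) as [M [HM HMe]].
  exists (fun x => M < x). split. exists M; auto.
  intros u v Hu Hv. rewrite ball_R. rewrite RInt_diff by apply Hd.
  destruct (Rle_dec u v).
  - eapply Rle_lt_trans. apply (dom_A1 f C); auto. lra.
    eapply Rle_lt_trans; [|apply HMe]. apply Rmult_le_compat_l; auto. apply exp_le_exp; lra.
  - rewrite RInt_abs_swap by apply Hd.
    eapply Rle_lt_trans. apply (dom_A1 f C); auto. lra.
    eapply Rle_lt_trans; [|apply HMe]. apply Rmult_le_compat_l; auto. apply exp_le_exp; lra.
Qed.

Lemma dom_lim_m f C : dom f C -> exists lm, filterlim (fun x => RInt f 0 x) (Rbar_locally m_infty) (locally lm).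
Proof.
  intros Hd. pose proof (dom_C_pos _ _ Hd) as HC.
  apply (filterlim_locally_cauchy (U:=R_CompleteSpace)).
  intros eps. destruct (tail_small C eps HC (cond_pos eps)) as [M [HM HMe]].
  exists (fun x => x < - M). split. exists (- M); auto.
  intros u v Hu Hv. rewrite ball_R. rewrite RInt_diff by apply Hd.
  destruct (Rle_dec u v).
  - eapply Rle_lt_trans. apply (dom_A2 f C); auto. lra.
    eapply Rle_lt_trans; [|apply HMe]. apply Rmult_le_compat_l; auto. apply exp_le_exp; lra.
  - rewrite RInt_abs_swap by apply Hd.
    eapply Rle_lt_trans. apply (dom_A2 f C); auto. lra.
    eapply Rle_lt_trans; [|apply HMe]. apply Rmult_le_compat_l; auto. apply exp_le_exp; lra.
Qed.

Lemma lim_le_p (F : R -> R) l c B M :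
  filterlim F (Rbar_locally p_infty) (locally l) ->
  (forall x, M < x -> Rabs (F x - c) <= B) -> Rabs (l - c) <= B.
Proof.
  intros Hl Hb. apply Rle_plus_epsilon. intros eps He.
  pose proof (proj1 (filterlim_locally F l) Hl (mkposreal eps He)) as [M' HM'].
  set (x := Rmax M M' + 1).
  specialize (HM' x ltac:(unfold x; pose proof (Rmax_r M M'); lra)).
  specialize (Hb x ltac:(unfold x; pose proof (Rmax_l M M'); lra)).
  rewrite ball_R in HM'. simpl in HM'.
  replace (l - c) with ((F x - c) - (F x - l)) by ring.
  eapply Rle_trans. apply Rabs_triang. rewrite Rabs_Ropp. lra.
Qed.

Lemma lim_le_m (F : R -> R) l c B M :
  filterlim F (Rbar_locally m_infty) (locally l) ->
  (forall x, x < M -> Rabs (F x - c) <= B) -> Rabs (l - c) <= B.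
Proof.
  intros Hl Hb. apply Rle_plus_epsilon. intros eps He.
  pose proof (proj1 (filterlim_locally F l) Hl (mkposreal eps He)) as [M' HM'].
  set (x := Rmin M M' - 1).
  specialize (HM' x ltac:(unfold x; pose proof (Rmin_r M M'); lra)).
  specialize (Hb x ltac:(unfold x; pose proof (Rmin_l M M'); lra)).
  rewrite ball_R in HM'. simpl in HM'.
  replace (l - c) with ((F x - c) - (F x - l)) by ring.
  eapply Rle_trans. apply Rabs_triang. rewrite Rabs_Ropp. lra.
Qed.

Lemma dom_deriv f C x : dom f C -> is_derive (fun x => RInt f 0 x) x (f x).
Proof.
  intros [Hc _]. apply (is_derive_RInt (V:=R_NormedModule) f (fun x => RInt f 0 x) 0 x).
  apply filter_forall. intros b. apply (RInt_correct (V:=R_CompleteNormedModule)). apply cont_ex_RInt; auto.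
  apply Hc.
Qed.

Lemma dom_Derive f C : dom f C -> forall x, Derive (fun x => RInt f 0 x) x = f x.
Proof. intros Hd x. apply is_derive_unique. eapply dom_deriv; eauto. Qed.

Lemma dom_int_gen f C Fa Fb la lb {FFa : Filter Fa} {FFb : Filter Fb} : dom f C ->
  filterlim (fun x => RInt f 0 x) Fa (locally la) ->
  filterlim (fun x => RInt f 0 x) Fb (locally lb) ->
  is_RInt_gen f Fa Fb (lb - la).
Proof.
  intros Hd Ha Hb.
  apply (is_RInt_gen_ext (Derive (fun x => RInt f 0 x))).
  apply filter_forall. intros ab x _. apply (dom_Derive f C Hd).
  apply is_RInt_gen_Derive; auto.
  - apply filter_forall. intros ab x _. eexists; eapply dom_deriv; eauto.
  - apply filter_forall. intros ab x _. apply (continuous_ext f). intros y. symmetry; apply (dom_Derive f C Hd).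
    apply Hd.
Qed.

Lemma dom_int f C : dom f C ->
  is_RInt_gen f (Rbar_locally m_infty) (Rbar_locally p_infty) (RInt_R f) /\ Rabs (RInt_R f) <= 2 * C.
Proof.
  intros Hd. destruct (dom_lim_p f C Hd) as [lp Hp]. destruct (dom_lim_m f C Hd) as [lm Hm].
  assert (H := dom_int_gen f C _ _ lm lp Hd Hm Hp).
  unfold RInt_R. rewrite (is_RInt_gen_unique _ _ H). split; auto.
  assert (Rabs (lp - 0) <= C).
  { apply (lim_le_p _ lp 0 C 0 Hp). intros x Hx. rewrite Rminus_0_r.
    eapply Rle_trans. apply (dom_A1 f C); auto. lra. rewrite Ropp_0, exp_0; lra. }
  assert (Rabs (lm - 0) <= C).
  { apply (lim_le_m _ lm 0 C 0 Hm). intros x Hx. rewrite Rminus_0_r.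
    rewrite RInt_abs_swap by apply Hd.
    eapply Rle_trans. apply (dom_A2 f C); auto. lra. rewrite exp_0; lra. }
  rewrite Rminus_0_r in *.
  eapply Rle_trans. apply Rabs_triang_inv2 || (unfold Rminus; apply Rabs_triang). rewrite Rabs_Ropp. lra.
Qed.

Lemma dom_unique f C l : dom f C -> is_RInt_gen f (Rbar_locally m_infty) (Rbar_locally p_infty) l -> l = RInt_R f.
Proof. intros _ H. unfold RInt_R. symmetry. apply (is_RInt_gen_unique _ _ H). Qed.

Lemma dom_Phi f C : dom f C -> exists lm, forall z,
  RInt_gen f (Rbar_locally m_infty) (at_point z) = RInt f 0 z - lm /\ Rabs (RInt f 0 z - lm) <= 2 * C.
Proof.
  intros Hd. destruct (dom_lim_m f C Hd) as [lm Hm]. exists lm. intros z.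
  assert (Hz : filterlim (fun x => RInt f 0 x) (at_point z) (locally (RInt f 0 z))).
  { intros P HP. exact (locally_singleton _ _ HP). }
  assert (H := dom_int_gen f C _ _ lm _ Hd Hm Hz).
  split. apply (is_RInt_gen_unique _ _ H).
  rewrite <- Rabs_Ropp. replace (- (RInt f 0 z - lm)) with (lm - RInt f 0 z) by ring.
  apply (lim_le_m _ lm _ (2 * C) z Hm). intros x Hx.
  rewrite RInt_diff by apply Hd. rewrite RInt_abs_swap by apply Hd.
  apply dom_A3; auto; lra.
Qed.


Lemma gauss_bound c z : 0 <= c ->
  exp (- z ^ 2 / 2) * exp (c * Rabs z) <= exp ((c + 1) ^ 2 / 2) * exp (- Rabs z).
Proof.
  intros Hc. rewrite <- !exp_plus. apply exp_le_exp.
  rewrite <- (pow2_abs z). pose proof (Rabs_pos z).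
  pose proof (pow2_ge_0 (Rabs z - (c+1))). nra.
Qed.

Lemma exp_series x : is_series (fun k => x ^ k / INR (fact k)) (exp x).
Proof.
  apply (is_series_ext (fun k => scal (pow_n x k) (/ INR (fact k)))).
  intros n. rewrite pow_n_pow. reflexivity.
  apply is_exp_Reals.
Qed.

Lemma lim_le_seq (u : nat -> R) l c B :
  filterlim u eventually (locally l) ->
  (forall n, Rabs (u n - c) <= B) -> Rabs (l - c) <= B.
Proof.
  intros Hl Hb. apply Rle_plus_epsilon. intros eps He.
  pose proof (proj1 (filterlim_locally u l) Hl (mkposreal eps He)) as [N HN].
  specialize (HN N (le_n _)). specialize (Hb N).
  rewrite ball_R in HN. simpl in HN.
  replace (l - c) with ((u N - c) - (u N - l)) by ring.
  eapply Rle_trans. apply Rabs_triang. rewrite Rabs_Ropp. lra.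
Qed.

Lemma sum_n_nonneg (a : nat -> R) n : (forall k, 0 <= a k) -> 0 <= sum_n a n.
Proof.
  intros H. induction n. rewrite sum_O; auto. rewrite sum_Sn. unfold plus; simpl.
  specialize (H (S n)). lra.
Qed.

Lemma lim_ge_seq (u : nat -> R) l c :
  filterlim u eventually (locally l) -> (forall n, c <= u n) -> c <= l.
Proof.
  intros Hl Hb. apply Rle_plus_epsilon. intros eps He.
  pose proof (proj1 (filterlim_locally u l) Hl (mkposreal eps He)) as [N HN].
  specialize (HN N (le_n _)). specialize (Hb N).
  rewrite ball_R in HN. simpl in HN.
  pose proof (Rle_abs (u N - l)). lra.
Qed.

Lemma term_le_exp y n : 0 <= y -> y ^ n / INR (fact n) <= exp y.
Proof.
  intros Hy.
  set (a := fun k => y ^ k / INR (fact k)).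
  assert (Ha : forall k, 0 <= a k).
  { intros k. unfold a. apply Rdiv_le_0_compat. apply pow_le; auto. apply INR_fact_lt_0. }
  assert (H1 : a n <= sum_n a n).
  { destruct n. rewrite sum_O; lra. rewrite sum_Sn. unfold plus; simpl.
    pose proof (sum_n_nonneg a n Ha). lra. }
  assert (H2 : forall m, sum_n a n <= sum_n a (n + m)).
  { induction m. rewrite Nat.add_0_r; lra. rewrite Nat.add_succ_r, sum_Sn. unfold plus; simpl.
    specialize (Ha (S (n + m))). lra. }
  assert (Hl := exp_series y).
  assert (Hl' : filterlim (fun m => sum_n a (n + m)) eventually (locally (exp y))).
  { eapply filterlim_comp; [|apply Hl]. intros P [N HN]. exists N. intros k Hk. apply HN. lia. }
  pose proof (lim_ge_seq _ _ _ Hl' H2). fold (a n). lra.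
Qed.

Lemma exp_term_bound x k : Rabs (x ^ k / INR (fact k)) <= exp (2 * Rabs x) * (/2) ^ k.
Proof.
  pose proof (term_le_exp (2 * Rabs x) k ltac:(pose proof (Rabs_pos x); lra)) as H.
  rewrite Rpow_mult_distr in H.
  unfold Rdiv. rewrite Rabs_mult, <- RPow_abs, Rabs_inv, (Rabs_right (INR (fact k))) by (left; apply INR_fact_lt_0).
  assert (E : Rabs x ^ k * / INR (fact k) = 2 ^ k * Rabs x ^ k * / INR (fact k) * (/2)^k).
  { rewrite pow_inv. pose proof (INR_fact_neq_0 k). pose proof (pow_nonzero 2 k ltac:(lra)). field. auto. }
  rewrite E. apply Rmult_le_compat_r. apply pow_le; lra. exact H.
Qed.

Lemma exp_tail x N : Rabs (exp x - sum_n (fun k => x ^ k / INR (fact k)) N) <= exp (2 * Rabs x) * (/2) ^ N.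
Proof.
  set (a := fun k => x ^ k / INR (fact k)). set (E := exp (2 * Rabs x)).
  assert (H : forall m, Rabs (sum_n a (N + m) - sum_n a N) <= E * ((/2)^N - (/2)^(N+m))).
  { induction m.
    - rewrite Nat.add_0_r, Rminus_eq_0, Rminus_eq_0, Rabs_R0, Rmult_0_r; lra.
    - rewrite Nat.add_succ_r, sum_Sn. unfold plus; simpl.
      replace (sum_n a (N + m) + a (S (N + m)) - sum_n a N) with ((sum_n a (N + m) - sum_n a N) + a (S (N + m))) by ring.
      eapply Rle_trans. apply Rabs_triang.
      pose proof (exp_term_bound x (S (N + m))). fold (a (S (N+m))) in H. fold E in H.
      simpl in H. simpl. lra. }
  assert (Hl := exp_series x).
  assert (Hl' : filterlim (fun m => sum_n a (N + m)) eventually (locally (exp x))).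
  { eapply filterlim_comp; [|apply Hl]. intros P [M HM]. exists M. intros k Hk. apply HM. lia. }
  apply (lim_le_seq _ _ _ _ Hl'). intros m. eapply Rle_trans. apply H.
  assert (0 <= (/2)^(N+m)) by (apply pow_le; lra). assert (0 < E) by apply exp_pos. nra.
Qed.

Lemma pow_le_exp z n : Rabs (z ^ n) <= INR (fact n) * exp (Rabs z).
Proof.
  pose proof (term_le_exp (Rabs z) n (Rabs_pos z)). rewrite <- RPow_abs.
  pose proof (INR_fact_lt_0 n).
  apply (Rmult_le_compat_l (INR (fact n))) in H; [|lra].
  replace (INR (fact n) * (Rabs z ^ n / INR (fact n))) with (Rabs z ^ n) in H by (field; lra). exact H.
Qed.


Definition IG (f : R -> R) (l : R) := is_RInt_gen f (Rbar_locally m_infty) (Rbar_locally p_infty) l.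

Lemma IG_plus f g lf lg : IG f lf -> IG g lg -> IG (fun z => f z + g z) (lf + lg).
Proof. intros H1 H2. exact (is_RInt_gen_plus f g lf lg H1 H2). Qed.
Lemma IG_minus f g lf lg : IG f lf -> IG g lg -> IG (fun z => f z - g z) (lf - lg).
Proof. intros H1 H2. exact (is_RInt_gen_minus f g lf lg H1 H2). Qed.
Lemma IG_scal k f l : IG f l -> IG (fun z => k * f z) (k * l).
Proof. intros H1. exact (is_RInt_gen_scal f k l H1). Qed.

Lemma phi_cont z : continuous phi z.
Proof. apply cd. unfold phi. auto_derive. auto. Qed.

Lemma phi_pos z : 0 < phi z.
Proof. unfold phi. apply Rdiv_lt_0_compat. apply exp_pos. apply sqrt_lt_R0. pose proof PI_RGT_0. lra. Qed.

Lemma dom_phi_exp f Bg c : 0 <= Bg -> 0 <= c -> (forall z, continuous f z) ->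
  (forall z, Rabs (f z) <= Bg * (phi z * exp (c * Rabs z))) ->
  dom f (Bg * (exp ((c + 1) ^ 2 / 2) / sqrt (2 * PI))).
Proof.
  intros HB Hc Hcont Hb. split; auto. intros z. eapply Rle_trans. apply Hb.
  assert (phi z * exp (c * Rabs z) <= exp ((c + 1) ^ 2 / 2) / sqrt (2 * PI) * exp (- Rabs z)).
  { unfold phi. pose proof (gauss_bound c z Hc).
    assert (0 < sqrt (2 * PI)) by (apply sqrt_lt_R0; pose proof PI_RGT_0; lra).
    unfold Rdiv. replace (exp (- z ^ 2 * / 2) * / sqrt (2 * PI) * exp (c * Rabs z)) with
      ((exp (- z ^ 2 / 2) * exp (c * Rabs z)) * / sqrt (2 * PI)) by (unfold Rdiv; ring).
    replace (exp ((c + 1) ^ 2 * / 2) * / sqrt (2 * PI) * exp (- Rabs z)) with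
      ((exp ((c + 1) ^ 2 / 2) * exp (- Rabs z)) * / sqrt (2 * PI)) by (unfold Rdiv; ring).
    apply Rmult_le_compat_r. left; apply Rinv_0_lt_compat; auto. auto. }
  rewrite Rmult_assoc. apply Rmult_le_compat_l; auto.
Qed.

Lemma cont_mult (f g : R -> R) z : continuous f z -> continuous g z -> continuous (fun x => f x * g x) z.
Proof. intros H1 H2. exact (continuous_mult f g z H1 H2). Qed.

Lemma cont_pow n z : continuous (fun x => x ^ n) z.
Proof. apply cd. auto_derive. auto. Qed.

Lemma cont_exp_lin v z : continuous (fun x => exp (v * x)) z.
Proof. apply cd. auto_derive. auto. Qed.

Section Main.
Variable g : R -> R.
Variable Bg : R.
Hypothesis gc : forall z, continuous g z.
Hypothesis gb : forall z, Rabs (g z) <= Bg.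

Lemma Bg_pos : 0 <= Bg.
Proof. pose proof (gb 0). pose proof (Rabs_pos (g 0)). lra. Qed.

Definition fn n := fun z => z ^ n * phi z * g z.
Definition mm n := RInt_R (fn n).

Lemma fn_cont n z : continuous (fn n) z.
Proof. unfold fn. apply cont_mult; auto. apply cont_mult; auto using cont_pow, phi_cont. Qed.

Lemma fn_scaled_dom r n : dom (fun z => r ^ n / INR (fact n) * fn n z)
   (Bg * (exp ((Rabs r + 1) ^ 2 / 2) / sqrt (2 * PI))).
Proof.
  apply dom_phi_exp. apply Bg_pos. apply Rabs_pos.
  intros z. apply cont_mult. apply continuous_const. apply fn_cont.
  intros z. unfold fn.
  replace (r ^ n / INR (fact n) * (z ^ n * phi z * g z)) with
     ((r * z) ^ n / INR (fact n) * phi z * g z) by (rewrite Rpow_mult_distr; field; apply INR_fact_neq_0).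
  rewrite !Rabs_mult. pose proof (phi_pos z). rewrite (Rabs_right (phi z)) by lra.
  pose proof (term_le_exp (Rabs (r * z)) n (Rabs_pos _)).
  rewrite Rabs_mult in H0.
  assert (Rabs ((r * z) ^ n / INR (fact n)) = (Rabs r * Rabs z) ^ n / INR (fact n)).
  { unfold Rdiv. rewrite Rabs_mult, <- RPow_abs, Rabs_mult, Rabs_inv, (Rabs_right (INR (fact n))) by (left; apply INR_fact_lt_0). auto. }
  rewrite H1. pose proof (gb z). pose proof (Rabs_pos (g z)).
  assert (0 <= (Rabs r * Rabs z) ^ n / INR (fact n)).
  { apply Rdiv_le_0_compat. apply pow_le. apply Rmult_le_pos; apply Rabs_pos. apply INR_fact_lt_0. }
  assert (0 < exp (Rabs r * Rabs z)) by apply exp_pos.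
  assert (A1 : (Rabs r * Rabs z) ^ n / INR (fact n) * phi z <= exp (Rabs r * Rabs z) * phi z) by nra.
  assert (0 <= (Rabs r * Rabs z) ^ n / INR (fact n) * phi z) by nra.
  apply Rle_trans with (exp (Rabs r * Rabs z) * phi z * Bg). nra. nra.
Qed.

Lemma fn_dom n : dom (fn n) (INR (fact n) * (Bg * (exp ((Rabs 1 + 1) ^ 2 / 2) / sqrt (2 * PI)))).
Proof.
  destruct (fn_scaled_dom 1 n) as [Hc Hb]. split. apply fn_cont.
  intros z. specialize (Hb z). rewrite pow1, Rabs_mult in Hb.
  pose proof (INR_fact_lt_0 n).
  rewrite Rabs_right with (r := 1 / INR (fact n)) in Hb by (left; apply Rdiv_lt_0_compat; lra).
  apply (Rmult_le_compat_l (INR (fact n))) in Hb; [|lra].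
  replace (INR (fact n) * (1 / INR (fact n) * Rabs (fn n z))) with (Rabs (fn n z)) in Hb by (field; lra).
  rewrite Rmult_assoc. exact Hb.
Qed.

Lemma fn_IG n : IG (fn n) (mm n).
Proof. exact (proj1 (dom_int _ _ (fn_dom n))). Qed.

Lemma mm_bound r n : Rabs (mm n / INR (fact n) * r ^ n) <= 2 * (Bg * (exp ((Rabs r + 1) ^ 2 / 2) / sqrt (2 * PI))).
Proof.
  destruct (dom_int _ _ (fn_scaled_dom r n)) as [H1 H2].
  assert (E : RInt_R (fun z => r ^ n / INR (fact n) * fn n z) = r ^ n / INR (fact n) * mm n).
  { symmetry. eapply dom_unique. apply (fn_scaled_dom r n). apply IG_scal. apply fn_IG. }
  rewrite E in H2. replace (mm n / INR (fact n) * r ^ n) with (r ^ n / INR (fact n) * mm n) by (field; apply INR_fact_neq_0).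
  exact H2.
Qed.


Lemma IG_ext f1 f2 l : (forall z, f1 z = f2 z) -> IG f1 l -> IG f2 l.
Proof. intros H. replace f2 with f1 by (apply functional_extensionality; auto). auto. Qed.

Lemma cont_sum (F : nat -> R -> R) N z : (forall k, continuous (F k) z) ->
  continuous (fun x => sum_n (fun k => F k x) N) z.
Proof.
  intros H. induction N.
  - apply (continuous_ext (F 0%nat)). intros x; rewrite sum_O; auto. auto.
  - apply (continuous_ext (fun x => sum_n (fun k => F k x) N + F (S N) x)).
    intros x; rewrite sum_Sn; auto.
    exact (continuous_plus _ _ z IHN (H (S N))).
Qed.

Definition tgt v := fun z => phi z * exp (v * z) * g z.

Lemma tgt_cont v z : continuous (tgt v) z.
Proof. unfold tgt. apply cont_mult; auto. apply cont_mult; auto using phi_cont, cont_exp_lin. Qed.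

Lemma tgt_dom v : dom (tgt v) (Bg * (exp ((Rabs v + 1) ^ 2 / 2) / sqrt (2 * PI))).
Proof.
  apply dom_phi_exp. apply Bg_pos. apply Rabs_pos. apply tgt_cont.
  intros z. unfold tgt. rewrite !Rabs_mult. pose proof (phi_pos z).
  rewrite (Rabs_right (phi z)) by lra. rewrite (Rabs_right (exp _)) by (left; apply exp_pos).
  assert (exp (v * z) <= exp (Rabs v * Rabs z)). { apply exp_le_exp. rewrite <- Rabs_mult. apply Rle_abs. }
  pose proof (gb z). pose proof (Rabs_pos (g z)). pose proof (exp_pos (v * z)).
  assert (0 <= phi z * exp (v * z)) by nra. pose proof Bg_pos.
  apply Rle_trans with (phi z * exp (v * z) * Bg). apply Rmult_le_compat_l; auto.
  assert (phi z * exp (v * z) <= phi z * exp (Rabs v * Rabs z)) by (apply Rmult_le_compat_l; lra).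
  rewrite (Rmult_comm Bg). apply Rmult_le_compat_r; auto.
Qed.

Lemma psum_IG v N : IG (fun z => sum_n (fun k => v ^ k / INR (fact k) * fn k z) N)
                       (sum_n (fun k => mm k / INR (fact k) * v ^ k) N).
Proof.
  induction N.
  - rewrite sum_O. apply (IG_ext (fun z => v ^ 0 / INR (fact 0) * fn 0 z)).
    intros z; rewrite sum_O; reflexivity.
    replace (mm 0 / INR (fact 0) * v ^ 0) with (v ^ 0 / INR (fact 0) * mm 0) by (unfold Rdiv; ring).
    apply IG_scal. apply fn_IG.
  - rewrite sum_Sn. apply (IG_ext (fun z => sum_n (fun k => v ^ k / INR (fact k) * fn k z) N + v ^ (S N) / INR (fact (S N)) * fn (S N) z)).
    intros z; rewrite sum_Sn; reflexivity.
    replace (plus (sum_n (fun k => mm k / INR (fact k) * v ^ k) N) (mm (S N) / INR (fact (S N)) * v ^ (S N)))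
      with (sum_n (fun k => mm k / INR (fact k) * v ^ k) N + v ^ (S N) / INR (fact (S N)) * mm (S N)) by (unfold plus; simpl; unfold Rdiv; ring).
    apply (IG_plus _ _ _ _ IHN). apply IG_scal. apply fn_IG.
Qed.

Lemma psum_ident v N z : sum_n (fun k => v ^ k / INR (fact k) * fn k z) N =
   sum_n (fun k => (v * z) ^ k / INR (fact k)) N * phi z * g z.
Proof.
  unfold fn. induction N.
  - rewrite !sum_O. rewrite Rpow_mult_distr. match goal with |- ?a = ?b => change (@eq R a b) end. unfold Rdiv; ring.
  - rewrite !sum_Sn. rewrite IHN. rewrite (Rpow_mult_distr v z (S N)). unfold plus; simpl.
    match goal with |- ?a = ?b => change (@eq R a b) end. unfold Rdiv; ring.
Qed.

Lemma err_dom v N : dom (fun z => tgt v z - sum_n (fun k => v ^ k / INR (fact k) * fn k z) N)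
   ((Bg * (/2) ^ N) * (exp ((2 * Rabs v + 1) ^ 2 / 2) / sqrt (2 * PI))).
Proof.
  apply dom_phi_exp. apply Rmult_le_pos. apply Bg_pos. apply pow_le; lra.
  pose proof (Rabs_pos v); lra.
  intros z. apply (continuous_minus (tgt v) (fun z => sum_n (fun k => v ^ k / INR (fact k) * fn k z) N)).
  apply tgt_cont. apply (cont_sum (fun k z => v ^ k / INR (fact k) * fn k z)).
  intros k. apply cont_mult. apply continuous_const. apply fn_cont.
  intros z. rewrite psum_ident. unfold tgt.
  replace (phi z * exp (v * z) * g z - sum_n (fun k : nat => (v * z) ^ k / INR (fact k)) N * phi z * g z)
    with (phi z * g z * (exp (v * z) - sum_n (fun k : nat => (v * z) ^ k / INR (fact k)) N)) by ring.
  pose proof (exp_tail (v * z) N). rewrite Rabs_mult in H.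
  replace (2 * (Rabs v * Rabs z)) with (2 * Rabs v * Rabs z) in H by ring.
  rewrite !Rabs_mult. pose proof (phi_pos z). rewrite (Rabs_right (phi z)) by lra.
  pose proof (gb z). pose proof (Rabs_pos (g z)).
  pose proof (Rabs_pos (exp (v * z) - sum_n (fun k : nat => (v * z) ^ k / INR (fact k)) N)).
  assert (0 <= phi z * Rabs (g z)) by nra.
  apply Rle_trans with (phi z * Rabs (g z) * (exp (2 * Rabs v * Rabs z) * (/ 2) ^ N)).
  apply Rmult_le_compat_l; auto.
  assert (0 <= exp (2 * Rabs v * Rabs z) * (/ 2) ^ N).
  { apply Rmult_le_pos. left; apply exp_pos. apply pow_le; lra. }
  assert (HH : phi z * Rabs (g z) * (exp (2 * Rabs v * Rabs z) * (/ 2) ^ N) <= phi z * Bg * (exp (2 * Rabs v * Rabs z) * (/ 2) ^ N)).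
  { apply Rmult_le_compat_r; auto. apply Rmult_le_compat_l; lra. }
  eapply Rle_trans. apply HH. right. ring.
Qed.

Lemma J_series v : is_series (fun n => mm n / INR (fact n) * v ^ n) (RInt_R (tgt v)).
Proof.
  set (J := RInt_R (tgt v)).
  set (Kv := exp ((2 * Rabs v + 1) ^ 2 / 2) / sqrt (2 * PI)).
  assert (HK : 0 <= Kv).
  { unfold Kv. apply Rdiv_le_0_compat. left; apply exp_pos. apply sqrt_lt_R0. pose proof PI_RGT_0; lra. }
  assert (Hb : forall N, Rabs (J - sum_n (fun k => mm k / INR (fact k) * v ^ k) N) <= 2 * (Bg * (/2) ^ N * Kv)).
  { intros N. destruct (dom_int _ _ (err_dom v N)) as [_ H2].
    rewrite <- (dom_unique _ _ _ (err_dom v N) (IG_minus _ _ _ _ (proj1 (dom_int _ _ (tgt_dom v))) (psum_IG v N))) in H2.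
    exact H2. }
  apply (proj2 (filterlim_locally _ J)). intros eps.
  destruct (pow_lt_1_zero (/2) ltac:(rewrite Rabs_right; lra) (eps / (2 * (Bg * Kv) + 1))) as [N HN].
  { apply Rdiv_lt_0_compat. apply cond_pos. pose proof Bg_pos. nra. }
  exists N. intros n Hn. rewrite ball_R. specialize (HN n Hn). specialize (Hb n).
  rewrite Rabs_minus_sym. eapply Rle_lt_trans. apply Hb.
  rewrite Rabs_right in HN by (apply Rle_ge, pow_le; lra).
  pose proof (cond_pos eps). pose proof Bg_pos.
  assert (0 <= Bg * Kv) by nra.
  assert ((/2)^n * (2 * (Bg * Kv) + 1) < eps).
  { apply (Rmult_lt_compat_r (2 * (Bg * Kv) + 1)) in HN; [|lra].
    replace (eps / (2 * (Bg * Kv) + 1) * (2 * (Bg * Kv) + 1)) with (pos eps) in HN by (field; lra). exact HN. }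
  assert (0 <= (/2)^n) by (apply pow_le; lra).
  replace (2 * (Bg * (/ 2) ^ n * Kv)) with ((/2)^n * (2 * (Bg * Kv))) by ring.
  assert ((/2)^n * (2 * (Bg * Kv)) <= (/2)^n * (2 * (Bg * Kv) + 1)) by (apply Rmult_le_compat_l; lra).
  lra.
Qed.

Lemma radius_inf x : Rbar_lt (Rabs x) (CV_radius (fun n => mm n / INR (fact n))).
Proof.
  destruct (CV_radius_bounded (fun n => mm n / INR (fact n))) as [Hub _].
  assert (H := Hub (Rabs x + 1)).
  assert (Rbar_le (Rabs x + 1) (CV_radius (fun n => mm n / INR (fact n)))).
  { apply H. eexists. intros n. apply mm_bound. }
  destruct (CV_radius (fun n => mm n / INR (fact n))); simpl in *; auto; lra.
Qed.

End Main.


Lemma dR_mult (f g : R -> R) x df dg : is_derive f x df -> is_derive g x dg ->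
  is_derive (fun t => f t * g t) x (df * g x + f x * dg).
Proof. intros H1 H2. exact (is_derive_mult f g x df dg H1 H2 Rmult_comm). Qed.

Lemma dR_minus (f g : R -> R) x df dg : is_derive f x df -> is_derive g x dg ->
  is_derive (fun t => f t - g t) x (df - dg).
Proof. intros H1 H2. exact (is_derive_minus f g x df dg H1 H2). Qed.

Lemma dR_comp (f g : R -> R) x df dg : is_derive f (g x) df -> is_derive g x dg ->
  is_derive (fun t => f (g t)) x (dg * df).
Proof. intros H1 H2. exact (is_derive_comp f g x df dg H1 H2). Qed.

Lemma dR_val (f : R -> R) x l l' : is_derive f x l -> l = l' -> is_derive f x l'.
Proof. intros H ->; auto. Qed.

Lemma Rpower_3_2 y : 0 < y -> Rpower y (3 / 2) = y * sqrt y.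
Proof.
  intros Hy. replace (3/2) with (1 + /2) by field. rewrite Rpower_plus, Rpower_1, Rpower_sqrt; auto.
Qed.

Lemma nu_deriv x : -1 < x < 1 -> is_derive nu x (1 / Rpower (1 - x ^ 2) (3 / 2)).
Proof.
  intros Hx. assert (Hp : 0 < 1 - x ^ 2) by (assert (x * x < 1) by nra; simpl; lra).
  rewrite Rpower_3_2 by auto. pose proof (sqrt_lt_R0 _ Hp).
  unfold nu. auto_derive. split; [simpl in Hp; lra|]. split; [|auto]. replace (1 + - (x * (x * 1))) with (1 - x^2) by ring. lra.
  replace (1 + - (x * (x * 1))) with (1 - x^2) by ring.
  assert (E : sqrt (1 - x ^ 2) * sqrt (1 - x ^ 2) = 1 - x ^ 2) by (apply sqrt_sqrt; lra).
  set (s := sqrt (1 - x ^ 2)) in *. field_simplify_eq; [|lra]. nra.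
Qed.

Lemma phi_dom : dom phi (1 * (exp ((0 + 1) ^ 2 / 2) / sqrt (2 * PI))).
Proof.
  apply dom_phi_exp; try lra. apply phi_cont.
  intros z. rewrite Rmult_0_l, exp_0, Rmult_1_r, Rmult_1_l. rewrite Rabs_right. lra. left; apply phi_pos.
Qed.

Lemma dR_const (c x : R) : is_derive (fun _ => c) x 0.
Proof. exact (is_derive_const (K:=R_AbsRing) c x). Qed.

Definition Cphi := 1 * (exp ((0 + 1) ^ 2 / 2) / sqrt (2 * PI)).

Lemma Phi_repr : exists lm, forall z, Phi z = RInt phi 0 z - lm /\ Rabs (RInt phi 0 z - lm) <= 2 * Cphi.
Proof. destruct (dom_Phi phi Cphi phi_dom) as [lm H]. exists lm. exact H. Qed.

Section K.
Variable K : nat.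
Definition gK := fun z => Phi z ^ (K - 1).

Lemma gK_cont z : continuous gK z.
Proof.
  destruct Phi_repr as [lm H].
  apply (continuous_ext (fun z => (RInt phi 0 z - lm) ^ (K - 1))).
  intros x. unfold gK. rewrite (proj1 (H x)). auto.
  apply cd. eexists. apply (is_derive_pow (fun z => RInt phi 0 z - lm)).
  apply dR_minus. apply (dom_deriv phi Cphi z phi_dom). apply dR_const.
Qed.

Lemma gK_bound z : Rabs (gK z) <= (2 * Cphi) ^ (K - 1).
Proof.
  destruct Phi_repr as [lm H]. destruct (H z) as [E B].
  unfold gK. rewrite <- RPow_abs, E. apply pow_incr. split; auto. apply Rabs_pos.
Qed.

Definition aK n := mm gK n / INR (fact n).

Lemma G_repr v : RInt_R (fun z => phi (z - v) * Phi z ^ (K - 1)) = exp (- v ^ 2 / 2) * PSeries aK v.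
Proof.
  unfold PSeries, aK.
  rewrite (is_series_unique _ _ (J_series gK _ gK_cont gK_bound v)).
  assert (Hf : (fun z => phi (z - v) * Phi z ^ (K - 1)) = (fun z => exp (- v ^ 2 / 2) * tgt gK v z)).
  { apply functional_extensionality. intros z. unfold tgt, phi, gK.
    replace (exp (- (z - v) ^ 2 / 2)) with (exp (- v ^ 2 / 2) * (exp (- z ^ 2 / 2) * exp (v * z))).
    field. apply Rgt_not_eq, sqrt_lt_R0. pose proof PI_RGT_0; lra.
    rewrite <- !exp_plus. f_equal. match goal with |- ?a = ?b => change (@eq R a b) end. field. }
  rewrite Hf. unfold RInt_R. apply is_RInt_gen_unique.
  apply IG_scal. exact (proj1 (dom_int _ _ (tgt_dom gK _ gK_cont gK_bound v))).
Qed.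

Lemma H_deriv (v : R) : is_derive (fun v => exp (- v ^ 2 / 2) * PSeries aK v) v
   (exp (- v ^ 2 / 2) * (PSeries (PS_derive aK) v - v * PSeries aK v)).
Proof.
  eapply dR_val. apply dR_mult.
  - assert (is_derive (fun v => exp (- v ^ 2 / 2)) v (exp (- v ^ 2 / 2) * (- v))).
    { auto_derive; auto. replace (exp (- (v * (v * 1)) * / 2)) with (exp (- v ^ 2 / 2)). field. f_equal. }
    exact H.
  - apply is_derive_PSeries. apply (radius_inf gK _ gK_cont gK_bound).
  - match goal with |- ?a = ?b => change (@eq R a b) end. unfold plus, mult; simpl. ring.
Qed.

End K.


Lemma terms_series K (v : R) :
  is_series (fun n : nat => v ^ n / INR (fact n) * (I K n - v * M K n))
    (PSeries (PS_derive (aK K)) v - v * PSeries (aK K) v).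
Proof.
  assert (HP : is_series (fun n => aK K n * v ^ n) (PSeries (aK K) v)).
  { apply Series_correct. apply ex_pseries_R. apply CV_radius_inside.
    apply (radius_inf (gK K) _ (gK_cont K) (gK_bound K)). }
  assert (HP' : is_series (fun n => PS_derive (aK K) n * v ^ n) (PSeries (PS_derive (aK K)) v)).
  { apply Series_correct. apply ex_pseries_R. apply CV_radius_inside.
    rewrite CV_radius_derive. apply (radius_inf (gK K) _ (gK_cont K) (gK_bound K)). }
  pose proof (is_series_minus _ _ _ _ HP' (is_series_scal_l v _ _ HP)) as H.
  eapply is_series_ext; [|exact H].
  intros n. change (PS_derive (aK K) n * v ^ n - v * (aK K n * v ^ n) = v ^ n / INR (fact n) * (I K n - v * M K n)).
  unfold PS_derive, aK.
  assert (EI : I K n = mm (gK K) (S n)). { unfold I. rewrite Nat.add_1_r. reflexivity. }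
  assert (EM : M K n = mm (gK K) n). { reflexivity. }
  rewrite EI, EM. rewrite fact_simpl, mult_INR.
  pose proof (INR_fact_neq_0 n). assert (INR (S n) <> 0) by (apply not_0_INR; lia).
  field. auto.
Qed.

Theorem proposition8 (K : nat) (alpha alpha' : R -> R)
  (hK : (2 <= K)%nat)
  (hrange : forall s, 0 <= alpha s < 1)
  (hder : forall s, is_derive alpha s (alpha' s)) :
  forall t : R,
    let nt := nu (alpha t) in
    let terms := fun n : nat =>
      nt ^ n / INR (fact n) * (I K n - nt * M K n) in
    ex_series terms /\
    is_derive (fun s => calT K (alpha s)) t
      (INR K * exp (- nt ^ 2 / 2) / (INR K - 1) *
       (alpha' t / Rpower (1 - alpha t ^ 2) (3 / 2)) * Series terms).
Proof.
  intros t nt terms.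
  pose proof (terms_series K nt) as HS. fold terms in HS.
  split. eexists; exact HS.
  rewrite (is_series_unique _ _ HS).
  set (Hf := fun v => exp (- v ^ 2 / 2) * PSeries (aK K) v).
  apply (is_derive_ext (fun s => INR K / (INR K - 1) * (Hf (nu (alpha s)) - 1 / INR K))).
  { intros s. unfold calT, Hf. rewrite G_repr. reflexivity. }
  assert (HK : 2 <= INR K) by (apply (le_INR 2); auto).
  assert (Ha := hrange t).
  assert (Hp : 0 < 1 - alpha t ^ 2) by (simpl; nra).
  assert (HRp : 0 < Rpower (1 - alpha t ^ 2) (3 / 2)) by apply exp_pos.
  eapply dR_val. apply is_derive_scal. apply dR_minus.
  apply (dR_comp Hf (fun s => nu (alpha s))).
  apply H_deriv. apply (dR_comp nu alpha). apply nu_deriv; lra. apply hder. apply dR_const.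
  fold nt. match goal with |- ?a = ?b => change (@eq R a b) end. field. split; lra.
Qed.
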